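(* Let $q$ be a prime power and $k\ge3$, $u\ge2$, $h\ge1$ integers. Let $U_1,\dots,U_h$ be $u$-dimensional subspaces of $\mathbf F_q^k$ with $U_i\cap U_j=\{0\}$ for $i\ne j$, and assume $q^k-q^{k-1}>h(q^u-1)$. Let $U$ be the set of nonzero vectors of $\mathbf F_q^k$ not in $U_1\cup\dots\cup U_h$, let $\widetilde G$ be a matrix whose columns consist of exactly one representative of each class $\{\lambda\mathbf v:\lambda\in\mathbf F_q^*\}$, $\mathbf v\in U$, and let $\mathbf C$ be the linear code with generator matrix $\widetilde G$. Then the Griesmer defect of $\mathbf C$ is at most $\sum_{i=1}^{k-u}\lfloor h/q^i\rfloor$.
   Context: For a linear $[n,k,d]_q$ code, $g_q(k,d)=\sum_{i=0}^{k-1}\lceil d/q^i\rceil$ and the Griesmer defect is $n-g_q(k,d)$. *)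

(* Defs.v *)
From HB Require Import structures.
From mathcomp Require Import all_boot all_order all_algebra all_field.
Set Implicit Arguments. Unset Strict Implicit. Unset Printing Implicit Defensive.
Import GRing.Theory.
Local Open Scope ring_scope.

Definition hwt (F : fieldType) (n : nat) (v : 'rV[F]_n) : nat :=
  #|[set j : 'I_n | v 0 j != 0]|.

(* minimum distance of the linear code with generator matrix G (k x n):
   the least weight of a nonzero codeword x *m G (defaults to n if the code is zero) *)
Definition min_dist (F : finFieldType) (k n : nat) (G : 'M[F]_(k, n)) : nat :=
  \big[minn/n]_(x : 'rV[F]_k | x *m G != 0) hwt (x *m G).

Definition ceil_div (a b : nat) : nat := (a + b.-1) %/ b.

Definition griesmer (q k d : nat) : nat := \sum_(i < k) ceil_div d (q ^ i).

Definition griesmer_defect (F : finFieldType) (q k n : nat) (G : 'M[F]_(k, n)) : nat :=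
  (n - griesmer q (\rank G) (min_dist G))%N.

(* Main.v *)
Require Import Defs.
From HB Require Import structures.
From mathcomp Require Import all_boot all_order all_algebra all_field.
From mathcomp Require Import zify.
Import GRing.Theory.
Local Open Scope ring_scope.
Set Implicit Arguments. Unset Strict Implicit. Unset Printing Implicit Defensive.

Section Nat.
Local Open Scope nat_scope.

Lemma ceil_sub X m Y : 0 < m -> Y <= X * m -> ceil_div (X * m - Y) m = X - Y %/ m.
Proof.
move=> m0 HY; rewrite /ceil_div.
set t := Y %/ m; set r := Y %% m.
have EY : Y = t * m + r by rewrite /t /r -divn_eq.
have rm : r < m by rewrite /r ltn_mod.
have tX : t <= X by rewrite -(leq_pmul2r m0); apply: leq_trans HY; rewrite EY leq_addr.
have -> : X * m - Y + m.-1 = (X - t) * m + (m.-1 - r).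
  rewrite mulnBl; move: HY; rewrite EY => HY.
  have : t * m <= X * m by rewrite leq_pmul2r.
  lia.
rewrite divnMDl // divn_small ?addn0 //; lia.
Qed.

Lemma rev_sum (f : nat -> nat) k : \sum_(i < k) f (k.-1 - i) = \sum_(i < k) f i.
Proof.
rewrite -(big_mkord xpredT (fun i => f (k.-1 - i))) -(big_mkord xpredT f) [RHS]big_nat_rev /=.
apply: eq_big_nat => i /andP [_ ik].
congr f; lia.
Qed.

Lemma arith (q k u h n d : nat) : 1 < q -> 0 < u -> u < k ->
  h * q ^ u.-1 <= q ^ k.-1 ->
  1 + h * (q ^ u - 1) + (q - 1) * n <= q ^ k ->
  q ^ k.-1 - h * q ^ u.-1 <= d ->
  n - griesmer q k d <= \sum_(1 <= i < (k - u).+1) h %/ q ^ i.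
Proof.
move=> q1 u0 uk hb Hn Hd.
have q0 : 0 < q by lia.
set a := k.-1; set b := u.-1.
have ka : k = a.+1 by rewrite /a; lia.
have ub : u = b.+1 by rewrite /b; lia.
set S := \sum_(1 <= i < (k - u).+1) h %/ q ^ i.
set F := fun i => h * q ^ b %/ q ^ i.
set g0 := griesmer q k (q ^ a - h * q ^ b).
have Hterm : forall i, i < k -> ceil_div (q ^ a - h * q ^ b) (q ^ i) = q ^ (a - i) - F i.
  move=> i ik; have E : q ^ a = q ^ (a - i) * q ^ i by rewrite -expnD subnK //; lia.
  rewrite /F {1}E ceil_sub ?expn_gt0 ?q0 //; rewrite -expnD subnK; [exact: hb|lia].
have Fle : forall i, i < k -> F i <= q ^ (a - i).
  move=> i ik; have E : q ^ a = q ^ (a - i) * q ^ i by rewrite -expnD subnK //; lia.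
  by rewrite /F (leq_trans (leq_div2r (q ^ i) hb)) // -/a E mulnK // expn_gt0 q0.
have Hsplit : g0 + \sum_(i < k) F i = \sum_(i < k) q ^ i.
  rewrite /g0 /griesmer -big_split /= -(rev_sum (fun i => q ^ i)).
  apply: eq_bigr => i _; rewrite Hterm // subnK ?Fle //.
have HF : \sum_(i < k) F i = h * \sum_(i < u) q ^ i + S.
  rewrite -(big_mkord xpredT) (big_cat_nat _ (n := u)) //=; last by lia.
  congr (_ + _).
    rewrite big_mkord -(rev_sum (fun i => q ^ i)) big_distrr /=.
    apply: eq_bigr => i _; rewrite /F.
    have -> : q ^ b = q ^ (u.-1 - i) * q ^ i by rewrite -expnD subnK // /b; have := ltn_ord i; lia.
    by rewrite mulnA mulnK // expn_gt0 q0.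
  rewrite /S ub -addn1 addnC big_addn.
  have -> : (k - (1 + b)).+1 = k - b by lia.
  apply: eq_big_nat => i /andP [i1 ik]; rewrite /F.
  by rewrite expnD divnMr // expn_gt0 q0.
have gmono : g0 <= griesmer q k d.
  apply: leq_sum => i _; rewrite /ceil_div leq_div2r // leq_add2r //.
have Hgeo : forall m, q ^ m = (q - 1) * \sum_(i < m) q ^ i + 1.
  move=> m; rewrite subn1 -predn_exp; have := expn_gt0 q m; rewrite q0 /=; lia.
have : (q - 1) * n <= (q - 1) * (g0 + S).
  move: Hn; rewrite (Hgeo k) (Hgeo u) -(leq_add2l (h * ((q - 1) * \sum_(i < u) q ^ i))).
  rewrite -Hsplit HF.
  set A := \sum_(i < u) q ^ i.
  rewrite !mulnDr; nia.
rewrite leq_pmul2l; last by lia.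
lia.
Qed.


Lemma card_indic (T : finType) (A : {set T}) : #|A| = \sum_(v : T) (v \in A : nat).
Proof.
rewrite -sum1_card big_mkcond /=; apply: eq_bigr => v _; by case: (v \in A).
Qed.

Lemma card_bigcup_le (T I : finType) (C : I -> {set T}) :
  #|\bigcup_i C i| <= \sum_i #|C i|.
Proof.
rewrite card_indic (eq_bigr (fun i => \sum_(v : T) (v \in C i : nat))); last first.
  by move=> i _; rewrite card_indic.
rewrite exchange_big /=; apply: leq_sum => v _.
case: (boolP (v \in \bigcup_i C i)) => [/bigcupP [i _ vi]|_] //.
by rewrite (bigD1 i) //= vi leq_addr.
Qed.

Lemma card_bigcup_disj (T I : finType) (C : I -> {set T}) :
  (forall i j v, i != j -> v \in C i -> v \in C j -> False) ->
  #|\bigcup_i C i| = \sum_i #|C i|.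
Proof.
move=> Hd.
rewrite card_indic (eq_bigr (fun i => \sum_(v : T) (v \in C i : nat))); last first.
  by move=> i _; rewrite card_indic.
rewrite exchange_big /=; apply: eq_bigr => v _.
case: (boolP (v \in \bigcup_i C i)) => [/bigcupP [i _ vi]|nv].
  rewrite (bigD1 i) //= vi big1 // => j ji.
  by case: (boolP (v \in C j)) => // vj; case: (Hd _ _ _ ji vj vi).
rewrite big1 // => j _; case: (boolP (v \in C j)) => // vj.
by case/negP: nv; apply/bigcupP; exists j.
Qed.

Lemma card_cover_le (T I : finType) (A B : {set T}) (C : I -> {set T}) :
  A \subset B :|: \bigcup_i C i -> #|A| <= #|B| + \sum_i #|C i|.
Proof.
move=> /subset_leq_card H; apply: (leq_trans H).
apply: (leq_trans (leq_card_setU _ _).1); rewrite leq_add2l.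
exact: card_bigcup_le.
Qed.

End Nat.


Lemma card_fibers (T J : finType) (f : T -> J) :
  #|T| = (\sum_(a : J) #|[set y | f y == a]|)%N.
Proof.
rewrite -sum1_card (partition_big f xpredT) //=.
apply: eq_bigr => a _; rewrite -sum1_card; apply: eq_bigl => y; by rewrite inE.
Qed.

Lemma ker_card (F : finFieldType) m (w : 'cV[F]_m) : w != 0 ->
  muln #|F| #|[set y : 'rV[F]_m | (y *m w) 0 0 == 0]| = expn #|F| m.
Proof.
move=> wn0.
have [i wi] : exists i, w i 0 != 0.
  apply/existsP; apply: contraR wn0; rewrite negb_exists => /forallP H.
  apply/eqP/matrixP => a b; rewrite (ord1 b) mxE; exact/eqP/negPn/H.
set y0 := (w i 0)^-1 *: delta_mx (0 : 'I_1) i.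
have fy0 : (y0 *m w) 0 0 = 1.
  by rewrite -scalemxAl -rowE !mxE mulVf.
set f := fun y : 'rV[F]_m => (y *m w) 0 0.
have fD : forall y a, f (y + a *: y0) = f y + a.
  move=> y a; rewrite /f mulmxDl -scalemxAl mxE [in X in _ + X]mxE fy0 mulr1.
  done.
have E : expn #|F| m = #|{: 'rV[F]_m}| by rewrite card_mx mul1n.
rewrite E (card_fibers f) (eq_bigr (fun _ => #|[set y | f y == 0]|)).
  rewrite sum_nat_const mulnC; congr (_ * _)%N; exact: eq_card.
move=> a _.
have -> : [set y | f y == a] = [set y + a *: y0 | y in [set y | f y == 0]].
  apply/setP => y; rewrite inE; apply/idP/imsetP.
    move=> /eqP fy; exists (y - a *: y0); last by rewrite addrNK.
    by rewrite inE -[- _]scaleNr fD fy subrr.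
  by move=> [z]; rewrite inE => /eqP fz ->; rewrite fD fz add0r.
by rewrite card_imset //; apply: addIr.
Qed.

Lemma ker_card_ge (F : finFieldType) m (w : 'cV[F]_m) :
  leq (expn #|F| m) (muln #|F| #|[set y : 'rV[F]_m | (y *m w) 0 0 == 0]|).
Proof.
have [->|wn0] := eqVneq w 0; last by rewrite ker_card.
have -> : #|[set y : 'rV[F]_m | (y *m (0 : 'cV[F]_m)) 0 0 == 0]| = #|{: 'rV[F]_m}|.
  apply: eq_card => y; rewrite !inE !mxE big1 ?eqxx // => j _; by rewrite mxE mulr0.
have E : expn #|F| m = #|{: 'rV[F]_m}| by rewrite card_mx mul1n.
rewrite E; apply: leq_pmull; exact: ltnW (card_finNzRing_gt1 _).
Qed.


Lemma rs_mem (F : finFieldType) k (A : 'M[F]_k) (v : 'rV[F]_k) :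
  (v <= A)%MS -> exists y, v = y *m row_base A.
Proof. by rewrite -(eq_row_base A) => /submxP. Qed.

Lemma rs_card (F : finFieldType) k (A : 'M[F]_k) :
  #|[set v : 'rV[F]_k | (v <= A)%MS]| = expn #|F| (\rank A).
Proof.
have ginj := row_free_inj (row_base_free A).
have -> : [set v : 'rV[F]_k | (v <= A)%MS] = [set y *m row_base A | y in [set: 'rV[F]_(\rank A)]].
  apply/setP => v; rewrite inE; apply/idP/imsetP.
    by move/rs_mem => [y ->]; exists y; rewrite ?inE.
  by move=> [y _ ->]; rewrite -(eq_row_base A) submxMl.
have E : expn #|F| (\rank A) = #|{: 'rV[F]_(\rank A)}| by rewrite card_mx mul1n.
rewrite E card_imset; [exact: cardsT | exact: ginj].
Qed.

Lemma rs_ker_ge (F : finFieldType) k (A : 'M[F]_k) (w : 'cV[F]_k) :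
  leq (expn #|F| (\rank A))
      (muln #|F| #|[set v : 'rV[F]_k | (v <= A)%MS && ((v *m w) 0 0 == 0)]|).
Proof.
have ginj := row_free_inj (row_base_free A).
apply: (leq_trans (ker_card_ge (row_base A *m w))).
rewrite leq_mul2l; apply/orP; right.
rewrite -(card_imset _ (ginj 1%N)); apply: subset_leq_card; apply/subsetP => v.
move=> /imsetP [y]; rewrite !inE => Hy ->.
by rewrite -(eq_row_base A) submxMl /= -mulmxA.
Qed.


Unset Implicit Arguments. Set Strict Implicit.

Theorem lemma2p2 (F : finFieldType) (q k u h n : nat)
  (Hq : #|F| = q) (Hk : (3 <= k)%N) (Hu : (2 <= u)%N) (Hh : (1 <= h)%N)
  (U : 'I_h -> 'M[F]_k)
  (HUdim : forall i, \rank (U i) = u)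
  (HUdisj : forall i j : 'I_h, i != j ->
     forall v : 'rV[F]_k, (v <= U i)%MS -> (v <= U j)%MS -> v = 0)
  (Hbig : (h * (q ^ u - 1) < q ^ k - q ^ k.-1)%N)
  (G : 'M[F]_(k, n))
  (Hcol : forall j : 'I_n,
     (col j G)^T != 0 /\ (forall i, ~~ ((col j G)^T <= U i)%MS))
  (Hnonprop : forall j1 j2 : 'I_n, j1 != j2 ->
     forall lam : F, (col j1 G)^T != lam *: (col j2 G)^T)
  (Hcover : forall v : 'rV[F]_k, v != 0 -> (forall i, ~~ (v <= U i)%MS) ->
     exists j : 'I_n, exists lam : F, lam != 0 /\ (col j G)^T = lam *: v) :
  (griesmer_defect q G <= \sum_(1 <= i < (k - u).+1) h %/ q ^ i)%N.
Proof.
have q1 : (1 < q)%N by rewrite -Hq; exact: card_finNzRing_gt1.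
have Eu : (q ^ u = q * q ^ u.-1)%N by rewrite -expnS prednK //; lia.
have Ek : (q ^ k = q * q ^ k.-1)%N by rewrite -expnS prednK //; lia.
have Q0 : (0 < q ^ u.-1)%N by rewrite expn_gt0; lia.
have P0 : (0 < q ^ k.-1)%N by rewrite expn_gt0; lia.
have hQP : (h * q ^ u.-1 < q ^ k.-1)%N.
  move: Hbig; rewrite Eu Ek; set Q := (q ^ u.-1)%N; set P := (q ^ k.-1)%N => Hb.
  have H1 : (Q * (q - 1) <= q * Q - 1)%N by rewrite mulnBr muln1 mulnC; lia.
  have H1' : (h * Q * (q - 1) <= h * (q * Q - 1))%N by rewrite -mulnA leq_mul2l H1 orbT.
  have H2 : (P * (q - 1) = q * P - P)%N by rewrite mulnBr muln1 mulnC.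
  have : (h * Q * (q - 1) < P * (q - 1))%N by rewrite H2; exact: leq_ltn_trans H1' Hb.
  rewrite ltn_pmul2r //; lia.
have uk : (u < k)%N.
  rewrite ltnNge; apply/negP => ku.
  have : (q ^ k.-1 <= q ^ u.-1)%N by rewrite leq_pexp2l //; lia.
  have : (q ^ u.-1 <= h * q ^ u.-1)%N by rewrite leq_pmull.
  lia.
set d0 := (q ^ k.-1 - h * q ^ u.-1)%N.
set c := fun j => (col j G)^T.
have wtE : forall (x : 'rV[F]_k) j, (x *m G) 0 j = (c j *m x^T) 0 0.
  move=> x j; rewrite !mxE; apply: eq_bigr => i _; by rewrite !mxE mulrC.
have Hw : forall x : 'rV[F]_k, x != 0 -> (d0 <= hwt (x *m G))%N.
  move=> x xn0; set w := x^T.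
  have wn0 : w != 0 by rewrite trmx_eq0.
  set K := [set v : 'rV[F]_k | (v *m w) 0 0 == 0].
  have HK : muln q #|K| = expn q k by rewrite -Hq ker_card.
  set Ki := fun i => [set v : 'rV[F]_k | (v <= U i)%MS && ((v *m w) 0 0 == 0)].
  set Ni := fun i => [set v : 'rV[F]_k | (v <= U i)%MS && ((v *m w) 0 0 != 0)].
  have HKi : forall i, (q ^ u <= q * #|Ki i|)%N.
    by move=> i; rewrite -Hq -(HUdim i) rs_ker_ge.
  have HNi : forall i, (#|Ni i| + #|Ki i| = q ^ u)%N.
    move=> i; rewrite -Hq -(HUdim i) -rs_card -(cardsID K [set v | (v <= U i)%MS]) addnC.
    congr (_ + _)%N; apply: eq_card => v; rewrite !inE //; exact: andbC.
  set V := [set v : 'rV[F]_k | ((v *m w) 0 0 != 0) && [forall i, ~~ (v <= U i)%MS]].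
  have HNK : (#|~: K| + #|K| = q ^ k)%N.
    have E : expn #|F| k = #|{: 'rV[F]_k}| by rewrite card_mx mul1n.
    by rewrite addnC cardsC -E Hq.
  have Ha : (#|~: K| <= #|V| + \sum_i #|Ni i|)%N.
    apply: card_cover_le; apply/subsetP => v; rewrite !inE => vK.
    case: (boolP [forall i, ~~ (v <= U i)%MS]) => [H|].
      by rewrite vK.
    rewrite andbF /= negb_forall => /existsP [i /negPn vi].
    apply/bigcupP; exists i => //; by rewrite inE vi vK.
  have Hb : (#|V| <= hwt (x *m G) * (q - 1))%N.
    rewrite /hwt -Hq subn1 -(cardsC1 (0 : F)) -cardsX.
    apply: (leq_trans _ (leq_imset_card (fun p : 'I_n * F => p.2^-1 *: c p.1) _)).
    apply: subset_leq_card; apply/subsetP => v; rewrite inE => /andP [vw /forallP vU].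
    have vn0 : v != 0 by apply: contraNneq vw => ->; rewrite mul0mx mxE.
    have [j [lam [lam0 Hj]]] := Hcover v vn0 vU.
    apply/imsetP; exists (j, lam); last by rewrite /= /c Hj scalerA mulVf // scale1r.
    rewrite !inE /= lam0 andbT wtE /c Hj -scalemxAl mxE mulf_neq0 //.
  have HKP : #|K| = (q ^ k.-1)%N.
    by apply/eqP; rewrite -(eqn_pmul2l (ltnW q1)) HK Ek.
  have HKQ : forall i, (q ^ u.-1 <= #|Ki i|)%N.
    by move=> i; rewrite -(leq_pmul2l (ltnW q1)) -Eu.
  have HNQ : forall i, (#|Ni i| <= q * q ^ u.-1 - q ^ u.-1)%N.
    move=> i; have := HNi i; have := HKQ i; rewrite Eu; lia.
  have Hsum : (\sum_i #|Ni i| <= h * (q * q ^ u.-1 - q ^ u.-1))%N.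
    rewrite -[in X in (_ <= X * _)%N](card_ord h) -sum_nat_const.
    by apply: leq_sum => i _.
  move: HNK Ha Hb Hsum; rewrite HKP Ek /d0.
  set P := (q ^ k.-1)%N; set Q := (q ^ u.-1)%N; set W := hwt (x *m G).
  move=> HNK Ha Hb Hsum.
  rewrite -(leq_pmul2r (_ : 0 < q - 1)%N); last by lia.
  rewrite mulnBl -mulnA.
  have E1 : (h * (q * Q - Q) = h * (Q * (q - 1)))%N by rewrite [(Q * _)%N]mulnC mulnBl mul1n.
  have E2 : (q * P - P = P * (q - 1))%N by rewrite [(P * _)%N]mulnC mulnBl mul1n.
  lia.
have Hn : (1 + h * (q ^ u - 1) + (q - 1) * n <= q ^ k)%N.
  set Z := [set v : 'rV[F]_k | (v != 0) && [forall i, ~~ (v <= U i)%MS]].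
  set C := fun i => [set v : 'rV[F]_k | (v <= U i)%MS && (v != 0)].
  have HC : forall i, #|C i| = (q ^ u - 1)%N.
    move=> i; rewrite -Hq -(HUdim i) -rs_card (cardsD1 0 [set v | (v <= U i)%MS]).
    rewrite inE sub0mx addKn; apply: eq_card => v; rewrite !inE; exact: andbC.
  have HCU : #|\bigcup_i C i| = (h * (q ^ u - 1))%N.
    rewrite card_bigcup_disj.
      rewrite (eq_bigr (fun _ => (q ^ u - 1)%N)); last by move=> i _; rewrite HC.
      by rewrite sum_nat_const card_ord.
    move=> i j v ij; rewrite !inE => /andP [vi vn0] /andP [vj _].
    by move: vn0; rewrite (HUdisj i j ij v vi vj) eqxx.
  have HZ : ((q - 1) * n <= #|Z|)%N.
    set D := [set p : 'I_n * F | p.2 != 0].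
    have HD : #|D| = ((q - 1) * n)%N.
      have -> : D = setX [set: 'I_n] [set~ (0 : F)].
        by apply/setP => p; rewrite !inE.
      rewrite cardsX cardsC1 Hq mulnC subn1; congr (_ * _)%N.
      by rewrite cardsT card_ord.
    rewrite -HD -(card_in_imset (f := fun p : 'I_n * F => p.2 *: c p.1)).
      apply: subset_leq_card; apply/subsetP => v /imsetP [[j lam]].
      rewrite /D inE /= => lam0 ->; rewrite /Z inE.
      have [cn0 cU] := Hcol j.
      rewrite scaler_eq0 negb_or lam0 cn0 /=; apply/forallP => i.
      apply: contra (cU i) => H.
      by rewrite -[(col j G)^T](scalerK lam0); apply: scalemx_sub.
    move=> [j1 l1] [j2 l2]; rewrite /D !inE /= => l1n l2n E.
    case: (eqVneq j1 j2) => [ej|nj].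
      subst j2; congr (_, _); have [cn0 _] := Hcol j1.
      apply/eqP; rewrite -subr_eq0; move: E => /eqP; rewrite -subr_eq0 -scalerBl.
      by rewrite scaler_eq0 (negPf cn0) orbF.
    have := Hnonprop j1 j2 nj (l1^-1 * l2); rewrite -scalerA -E /c scalerA mulVf //.
    by rewrite scale1r eqxx.
  have Hdisj : #|\bigcup_i C i :|: Z| = (#|\bigcup_i C i| + #|Z|)%N.
    apply/eqP; rewrite (leq_card_setU _ _).2 disjoints_subset; apply/subsetP => v.
    move=> /bigcupP [i _]; rewrite !inE => /andP [vi _].
    by rewrite negb_and; apply/orP; right; rewrite negb_forall; apply/existsP; exists i; rewrite vi.
  have Hsub : (#|\bigcup_i C i :|: Z| <= (q ^ k).-1)%N.
    have E : expn #|F| k = #|{: 'rV[F]_k}| by rewrite card_mx mul1n.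
    rewrite -Hq E -(cardsC1 (0 : 'rV[F]_k)); apply: subset_leq_card; apply/subsetP => v.
    rewrite !inE => /orP [/bigcupP [i _]|/andP [] //]; rewrite /C inE => /andP [] //.
  have : (0 < q ^ k)%N by rewrite expn_gt0; lia.
  lia.
have d0pos : (0 < d0)%N by rewrite /d0; lia.
have H0 : hwt (0 : 'rV[F]_n) = 0%N.
  by rewrite /hwt; apply: eq_card0 => j; rewrite !inE mxE eqxx.
have Hrank : \rank G = k.
  apply/eqP; apply: inj_row_free => v vG.
  case: (eqVneq v 0) => // vn0.
  by have := Hw v vn0; rewrite vG H0 leqn0 => /eqP d00; rewrite d00 in d0pos.
have k0 : (0 < k)%N by lia.
have Hd : (d0 <= min_dist G)%N.
  rewrite /min_dist; apply: (big_ind (fun m => d0 <= m)%N).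
  - pose x0 : 'rV[F]_k := delta_mx 0 (Ordinal k0).
    have x0n : x0 != 0.
      apply/eqP => /matrixP /(_ 0 (Ordinal k0)); rewrite !mxE !eqxx /= => /eqP.
      by rewrite oner_eq0.
    apply: (leq_trans (Hw _ x0n)); rewrite /hwt.
    by apply: (leq_trans (max_card _)); rewrite card_ord.
  - by move=> a b Ha Hb; rewrite leq_min Ha Hb.
  - move=> x xG; apply: Hw; apply: contraNneq xG => ->; by rewrite mul0mx.
rewrite /griesmer_defect Hrank.
by apply: arith => //; lia.
Qed.
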